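(* Let $X\in\mathbb{R}^T$ and let $F=\{[s_m,e_m]\}_{m=1}^M$ be a collection of intervals with $1\le s_m<e_m\le T$. The set of change-point candidates (with their side information) produced by the recursive call $\textsc{WBS}(1,T,0)$ coincides with the set $\mathcal P$ produced by the non-recursive procedure described in the context (ties assumed absent). Moreover, if $(m_k)_{k=1}^{\tilde N}$ is the order in which tuples enter $\mathcal P$ in the non-recursive procedure, then the sequence $(|\tilde X_{s_{m_k},e_{m_k}}^{b_{m_k}}|)_{k=1}^{\tilde N}$ is non-increasing.
   Context: For $1\le s\le b<e\le T$ and $n=e-s+1$, the CUSUM statistic is $\tilde X_{s,e}^b=\sqrt{\frac{e-b}{n(b-s+1)}}\sum_{t=s}^b X_t-\sqrt{\frac{b-s+1}{n(e-b)}}\sum_{t=b+1}^e X_t$. Recursive WBS with threshold $\zeta$, $\textsc{WBS}(s,e,\zeta)$: if $e-s<1$ stop; otherwise let $\mathcal M_{s,e}$ be the set of indices $m$ with $[s_m,e_m]\subseteq[s,e]$; let $(m_0,b_{m_0})=\arg\max_{m\in\mathcal M_{s,e},\ b\in\{s_m,\ldots,e_m-1\}}|\tilde X_{s_m,e_m}^b|$; if $|\tilde X_{s_{m_0},e_{m_0}}^{b_{m_0}}|\ge\zeta$, record $b_{m_0}$ with side information $(m_0,s_{m_0},e_{m_0},|\tilde X_{s_{m_0},e_{m_0}}^{b_{m_0}}|)$ and call $\textsc{WBS}(s,b_{m_0},\zeta)$ and $\textsc{WBS}(b_{m_0}+1,e,\zeta)$; otherwise stop. (If $\mathcal M_{s,e}=\emptyset$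 nothing is recorded.) Non-recursive procedure: for each $m$ let $b_m=\arg\max_{b\in\{s_m,\ldots,e_m-1\}}|\tilde X_{s_m,e_m}^b|$. Initialise $\mathcal C=\{(m,s_m,e_m,b_m,|\tilde X_{s_m,e_m}^{b_m}|):m=1,\ldots,M\}$, $\mathcal P=\emptyset$. While $\mathcal C\ne\emptyset$: let $m_0$ maximise $|\tilde X_{s_m,e_m}^{b_m}|$ over tuples in $\mathcal C$, add its tuple to $\mathcal P$, and remove from $\mathcal C$ all tuples with $s_m\le b_{m_0}<e_m$. *)

(* Defs.v *)
From Stdlib Require Import Reals Lra Lia Arith List Bool.
Import ListNotations.
Open Scope R_scope.

(* sum_{t=a}^{c} X t  (empty if c < a) *)
Definition sumX (X : nat -> R) (a c : nat) : R :=
  fold_right Rplus 0 (map X (seq a (S c - a))).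

Definition cusum (X : nat -> R) (s e b : nat) : R :=
  let n := INR (e - s + 1) in
  sqrt (INR (e - b) / (n * INR (b - s + 1))) * sumX X s b
  - sqrt (INR (b - s + 1) / (n * INR (e - b))) * sumX X (S b) e.

Definition acusum (X : nat -> R) (s e b : nat) : R := Rabs (cusum X s e b).

(* argmax of f over a list: the first element attaining the maximum
   (under the no-ties assumption this is THE argmax). *)
Definition argmax {A : Type} (f : A -> R) (l : list A) : option A :=
  fold_left (fun acc x =>
    match acc with
    | None => Some x
    | Some y => if Rlt_dec (f y) (f x) then Some x else Some y
    end) l None.

(* Side-information tuple (m, s_m, e_m, b, |X~_{s_m,e_m}^b|). *)
Definition tuple : Type := (nat * nat * nat * nat * R)%type.
Definition tval (x : tuple) : R := let '(_, _, _, _, v) := x in v.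
Definition tb (x : tuple) : nat := let '(_, _, _, b, _) := x in b.
Definition ts (x : tuple) : nat := let '(_, s, _, _, _) := x in s.
Definition te (x : tuple) : nat := let '(_, _, e, _, _) := x in e.

Section Procedures.
Variables (X : nat -> R) (M : nat) (s e : nat -> nat).
(* intervals are indexed by m = 1, ..., M, the m-th one being [s m, e m] *)

Definition mk_tuple (m b : nat) : tuple :=
  (m, s m, e m, b, acusum X (s m) (e m) b).

Definition cands (a c : nat) : list (nat * nat) :=
  flat_map (fun m =>
    if (a <=? s m)%nat && (e m <=? c)%nat
    then map (fun b => (m, b)) (seq (s m) (e m - s m))
    else []) (seq 1 M).

Fixpoint wbs_fuel (fuel : nat) (zeta : R) (a c : nat) : list tuple :=
  match fuel with
  | O => []
  | S f =>
    if (c <=? a)%nat then []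
    else match argmax (fun p => acusum X (s (fst p)) (e (fst p)) (snd p))
                      (cands a c) with
         | None => []
         | Some (m0, b0) =>
           if Rle_dec zeta (acusum X (s m0) (e m0) b0)
           then mk_tuple m0 b0 :: (wbs_fuel f zeta a b0 ++ wbs_fuel f zeta (S b0) c)
           else []
         end
  end.

(* the fuel e - s + 1 (length of the interval) is always sufficient *)
Definition WBS (a c : nat) (zeta : R) : list tuple :=
  wbs_fuel (c - a + 1) zeta a c.

Definition bm (m : nat) : nat :=
  match argmax (fun b => acusum X (s m) (e m) b) (seq (s m) (e m - s m)) with
  | Some b => b
  | None => s m
  end.

Definition C0 : list tuple := map (fun m => mk_tuple m (bm m)) (seq 1 M).

(* one loop iteration on C, returning the tuples in the order they enter P *)
Fixpoint nonrec_fuel (fuel : nat) (C : list tuple) : list tuple :=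
  match fuel with
  | O => []
  | S f =>
    match argmax tval C with
    | None => []
    | Some x0 =>
      x0 :: nonrec_fuel f
              (filter (fun x => negb ((ts x <=? tb x0)%nat && (tb x0 <? te x)%nat)) C)
    end
  end.

(* each iteration removes at least the selected tuple, so M iterations suffice *)
Definition NonRecP : list tuple := nonrec_fuel (length C0) C0.

End Procedures.

(* Main.v *)
Require Import Defs.
From Stdlib Require Import Reals List Lra Lia Arith Bool.
Import ListNotations.
Open Scope R_scope.

Lemma argmax_gen {A} (f : A -> R) (l : list A) (acc : option A) :
  match fold_left (fun acc x => match acc with None => Some x | Some y => if Rlt_dec (f y) (f x) then Some x else Some y end) l acc with
  | None => acc = None /\ l = []
  | Some x => (acc = Some x \/ In x l) /\ (forall y, In y l -> f y <= f x) /\ (forall y, acc = Some y -> f y <= f x)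
  end.
Proof.
  revert acc; induction l as [|a l IH]; intros acc; simpl.
  - destruct acc as [x|]; auto. split; [left; reflexivity|]. split; [intros y []|].
    intros y Hy; inversion Hy; subst; lra.
  - specialize (IH (match acc with None => Some a | Some y => if Rlt_dec (f y) (f a) then Some a else Some y end)).
    destruct (fold_left _ l _) as [x|].
    + destruct IH as [H1 [H2 H3]].
      destruct acc as [y|].
      * destruct (Rlt_dec (f y) (f a)) as [Hlt|Hlt].
        -- split. { destruct H1 as [H1|H1]; [inversion H1; subst; right; left; auto | right; right; auto]. }
           split. { intros z [<-|Hz]; [apply H3; auto | auto]. }
           intros z Hz; inversion Hz; subst. specialize (H3 a eq_refl). lra.
        -- split. { destruct H1 as [H1|H1]; [inversion H1; subst; left; auto | right; right; auto]. }
           split. { intros z [<-|Hz]; [specialize (H3 y eq_refl); lra | auto]. }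
           intros z Hz; inversion Hz; subst; auto.
      * split. { destruct H1 as [H1|H1]; [inversion H1; subst; right; left; auto| right; right; auto]. }
        split. { intros z [<-|Hz]; [apply H3; auto|auto]. } discriminate.
    + destruct IH as [H1 _]. destruct acc; [destruct (Rlt_dec _ _)|]; discriminate.
Qed.

Lemma argmax_spec {A} (f : A -> R) l :
  match argmax f l with None => l = [] | Some x => In x l /\ forall y, In y l -> f y <= f x end.
Proof.
  unfold argmax. pose proof (argmax_gen f l None) as H.
  destruct (fold_left _ l None); [|tauto].
  destruct H as [[H|H] [H2 _]]; [discriminate|]. auto.
Qed.

Definition notkill (x0 x : tuple) : bool := negb ((ts x <=? tb x0)%nat && (tb x0 <? te x)%nat).
Definition valid (x : tuple) : Prop := (ts x <= tb x < te x)%nat.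
Definition inj (C : list tuple) : Prop :=
  forall x y, In x C -> In y C -> tval x = tval y -> x = y.

Lemma nonrec_nil f : nonrec_fuel f [] = [].
Proof. destruct f; reflexivity. Qed.

Lemma nonrec_in f : forall C x, In x (nonrec_fuel f C) -> In x C.
Proof.
  induction f; simpl; intros C x H; [contradiction|].
  pose proof (argmax_spec tval C) as Hs.
  destruct (argmax tval C) as [x0|]; [|contradiction].
  destruct H as [<-|H]; [tauto|]. apply IHf in H. apply filter_In in H. tauto.
Qed.

Lemma filter_lt {A} (p : A -> bool) l a : In a l -> p a = false -> (length (filter p l) < length l)%nat.
Proof.
  induction l as [|b l IH]; simpl; [tauto|]. intros [<-|H] Hp.
  - rewrite Hp. pose proof (filter_length_le p l). lia.
  - destruct (p b); simpl; specialize (IH H Hp); lia.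
Qed.

Lemma notkill_self x : valid x -> notkill x x = false.
Proof.
  unfold valid, notkill; intros H.
  destruct (Nat.leb_spec (ts x) (tb x)); [|lia]. destruct (Nat.ltb_spec (tb x) (te x)); [|lia]. reflexivity.
Qed.

Lemma nonrec_ext n : forall C C' f f', (length C + length C' <= n)%nat ->
  (length C <= f)%nat -> (length C' <= f')%nat ->
  (forall x, In x C <-> In x C') -> (forall x, In x C -> valid x) -> inj C ->
  forall x, In x (nonrec_fuel f C) <-> In x (nonrec_fuel f' C').
Proof.
  induction n as [|n IH]; intros C C' f f' Hn Hf Hf' Hs Hv Hi x.
  - destruct C; [|simpl in Hn; lia]. destruct C'; [|simpl in Hn; lia].
    rewrite !nonrec_nil; tauto.
  - destruct C as [|c Ct].
    + destruct C' as [|c' Ct']. { rewrite !nonrec_nil; tauto. }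
      exfalso. apply (proj2 (Hs c')). left; auto.
    + destruct f as [|f]; [simpl in Hf; lia|].
      destruct C' as [|c' Ct']. { exfalso. apply (proj1 (Hs c)). left; auto. }
      destruct f' as [|f']; [simpl in Hf'; lia|].
      cbn [nonrec_fuel].
      pose proof (argmax_spec tval (c :: Ct)) as H1.
      pose proof (argmax_spec tval (c' :: Ct')) as H2.
      destruct (argmax tval (c :: Ct)) as [x0|]; [|discriminate].
      destruct (argmax tval (c' :: Ct')) as [x1|]; [|discriminate].
      destruct H1 as [H1a H1b]; destruct H2 as [H2a H2b].
      assert (x1 = x0) as ->.
      { apply Hi; [apply Hs; auto | auto |].
        apply Rle_antisym; [apply H1b; apply Hs; auto | apply H2b; apply Hs; auto]. }
      set (C := c :: Ct) in *. set (C' := c' :: Ct') in *.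
      pose proof (filter_lt (notkill x0) C x0 H1a (notkill_self x0 (Hv x0 H1a))) as L1.
      assert (H1a' : In x0 C') by (apply Hs; auto).
      pose proof (filter_lt (notkill x0) C' x0 H1a' (notkill_self x0 (Hv x0 H1a))) as L2.
      unfold notkill in L1, L2.
      assert (IH' := IH (filter (fun x => negb ((ts x <=? tb x0)%nat && (tb x0 <? te x)%nat)) C)
                        (filter (fun x => negb ((ts x <=? tb x0)%nat && (tb x0 <? te x)%nat)) C') f f').
      cbn [In]. rewrite IH'; [tauto| lia | lia | lia | | | ].
      * intros y; rewrite !filter_In. rewrite Hs. tauto.
      * intros y Hy; apply filter_In in Hy; apply Hv; tauto.
      * intros y z Hy Hz; apply filter_In in Hy; apply filter_In in Hz; apply Hi; tauto.
Qed.

Lemma filter_all {A} (p : A -> bool) l : (forall x, In x l -> p x = true) -> filter p l = l.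
Proof. induction l; simpl; intros H; auto. rewrite H by auto. rewrite IHl; auto. Qed.

Definition sep (A B : list tuple) : Prop :=
  forall a b, In a A -> In b B -> notkill a b = true /\ notkill b a = true.

Lemma nonrec_app f : forall A B fA fB, (length A + length B <= f)%nat ->
  (length A <= fA)%nat -> (length B <= fB)%nat ->
  (forall x, In x (A ++ B) -> valid x) -> inj (A ++ B) -> sep A B ->
  forall x, In x (nonrec_fuel f (A ++ B)) <-> In x (nonrec_fuel fA A) \/ In x (nonrec_fuel fB B).
Proof.
  induction f as [|f IH]; intros A B fA fB Hf HA HB Hv Hi Hsep x.
  - destruct A; [|simpl in Hf; lia]. destruct B; [|simpl in Hf; lia].
    rewrite !nonrec_nil; simpl; tauto.
  - simpl nonrec_fuel at 1.
    pose proof (argmax_spec tval (A ++ B)) as H1.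
    destruct (argmax tval (A ++ B)) as [x0|].
    2:{ apply app_eq_nil in H1. destruct H1 as [-> ->]. rewrite !nonrec_nil; simpl; tauto. }
    destruct H1 as [H1a H1b].
    pose proof (notkill_self x0 (Hv x0 H1a)) as Hself. unfold notkill in Hself.
    rewrite filter_app.
    apply in_app_or in H1a. destruct H1a as [Ha|Hb].
    + destruct fA as [|fA]. { destruct A; [contradiction| simpl in HA; lia]. }
      simpl nonrec_fuel at 2.
      pose proof (argmax_spec tval A) as H2.
      destruct (argmax tval A) as [z|]; [|subst; contradiction].
      destruct H2 as [H2a H2b].
      assert (z = x0) as ->.
      { apply Hi; [apply in_or_app; auto| apply in_or_app; auto|].
        apply Rle_antisym; [apply H1b; apply in_or_app; auto| apply H2b; auto]. }
      rewrite (filter_all (fun x => negb ((ts x <=? tb x0)%nat && (tb x0 <? te x)%nat)) B).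
      2:{ intros y Hy. exact (proj1 (Hsep x0 y Ha Hy)). }
      pose proof (filter_lt (fun x => negb ((ts x <=? tb x0)%nat && (tb x0 <? te x)%nat)) A x0 Ha Hself).
      cbn [In]. rewrite (IH _ B fA fB); [tauto | lia | lia | lia | | | ].
      * intros y Hy; apply in_app_or in Hy; destruct Hy as [Hy|Hy]; [apply filter_In in Hy|]; apply Hv; apply in_or_app; tauto.
      * intros y z Hy Hz; apply Hi; apply in_or_app;
        [apply in_app_or in Hy| apply in_app_or in Hz]; rewrite ?filter_In in *; tauto.
      * intros a b Ha' Hb'; apply filter_In in Ha'; apply Hsep; tauto.
    + destruct fB as [|fB]. { destruct B; [contradiction| simpl in HB; lia]. }
      simpl nonrec_fuel at 3.
      pose proof (argmax_spec tval B) as H2.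
      destruct (argmax tval B) as [z|]; [|subst; contradiction].
      destruct H2 as [H2a H2b].
      assert (z = x0) as ->.
      { apply Hi; [apply in_or_app; auto| apply in_or_app; auto|].
        apply Rle_antisym; [apply H1b; apply in_or_app; auto| apply H2b; auto]. }
      rewrite (filter_all (fun x => negb ((ts x <=? tb x0)%nat && (tb x0 <? te x)%nat)) A).
      2:{ intros y Hy. exact (proj2 (Hsep y x0 Hy Hb)). }
      pose proof (filter_lt (fun x => negb ((ts x <=? tb x0)%nat && (tb x0 <? te x)%nat)) B x0 Hb Hself).
      cbn [In]. rewrite (IH A _ fA fB); [tauto | lia | lia | lia | | | ].
      * intros y Hy; apply in_app_or in Hy; destruct Hy as [Hy|Hy]; [|apply filter_In in Hy]; apply Hv; apply in_or_app; tauto.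
      * intros y z Hy Hz; apply Hi; apply in_or_app;
        [apply in_app_or in Hy| apply in_app_or in Hz]; rewrite ?filter_In in *; tauto.
      * intros a b Ha' Hb'; apply filter_In in Hb'; apply Hsep; tauto.
Qed.

Lemma nonrec_sorted f : forall C k d, (S k < length (nonrec_fuel f C))%nat ->
  tval (nth (S k) (nonrec_fuel f C) d) <= tval (nth k (nonrec_fuel f C) d).
Proof.
  induction f as [|f IH]; simpl; intros C k d Hk; [simpl in Hk; lia|].
  pose proof (argmax_spec tval C) as Hs.
  destruct (argmax tval C) as [x0|]; [|simpl in Hk; lia].
  simpl in Hk |- *.
  match goal with |- context [nth k ?L d] => set (L0 := L) in * end.
  assert (HL : forall y, In y L0 -> In y C).
  { intros y Hy. apply nonrec_in in Hy. apply filter_In in Hy. tauto. }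
  destruct k as [|k].
  - destruct Hs as [_ Hs]. apply Hs. apply HL. apply nth_In. lia.
  - apply IH. unfold L0 in Hk. lia.
Qed.

Definition Cset X M s e (a c : nat) : list tuple :=
  filter (fun x => ((a <=? ts x) && (te x <=? c))%nat) (C0 X M s e).

Lemma C0_in X M s e x : In x (C0 X M s e) <->
  exists m, (1 <= m <= M)%nat /\ x = mk_tuple X s e m (bm X s e m).
Proof.
  unfold C0. rewrite in_map_iff. split.
  - intros [m [<- Hm]]. apply in_seq in Hm. exists m. split; [lia|auto].
  - intros [m [Hm ->]]. exists m. split; auto. apply in_seq. lia.
Qed.

Lemma bm_spec X s e m : (s m < e m)%nat ->
  (s m <= bm X s e m < e m)%nat /\
  forall b, (s m <= b < e m)%nat -> acusum X (s m) (e m) b <= acusum X (s m) (e m) (bm X s e m).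
Proof.
  intros H. unfold bm.
  pose proof (argmax_spec (fun b => acusum X (s m) (e m) b) (seq (s m) (e m - s m))) as Hs.
  destruct (argmax _ _) as [b|].
  - destruct Hs as [H1 H2]. apply in_seq in H1. split; [lia|].
    intros b' Hb'. apply H2. apply in_seq. lia.
  - destruct (e m - s m)%nat eqn:E; [lia|]. discriminate.
Qed.

Lemma cands_in M s e a c m b : In (m, b) (cands M s e a c) <->
  (1 <= m <= M)%nat /\ (a <= s m)%nat /\ (e m <= c)%nat /\ (s m <= b < e m)%nat.
Proof.
  unfold cands. rewrite in_flat_map. split.
  - intros [m' [Hm' Hin]]. apply in_seq in Hm'.
    destruct (Nat.leb_spec a (s m')); destruct (Nat.leb_spec (e m') c); simpl in Hin; try contradiction.
    apply in_map_iff in Hin. destruct Hin as [b' [Heq Hb']]. inversion Heq; subst.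
    apply in_seq in Hb'. lia.
  - intros (Hm & Ha & Hc & Hb). exists m. split; [apply in_seq; lia|].
    destruct (Nat.leb_spec a (s m)); destruct (Nat.leb_spec (e m) c); try lia. simpl.
    apply in_map_iff. exists b. split; auto. apply in_seq. lia.
Qed.

Ltac bdestr := repeat match goal with
  | |- context [(?u <=? ?v)%nat] => destruct (Nat.leb_spec u v)
  | |- context [(?u <? ?v)%nat] => destruct (Nat.ltb_spec u v) end.

Section Main.
Context (X : nat -> R) (M : nat) (s e : nat -> nat)
  (Hse : forall m, (1 <= m <= M)%nat -> (s m < e m)%nat)
  (Hnoties : forall m1 b1 m2 b2,
      (1 <= m1 <= M)%nat -> (s m1 <= b1 < e m1)%nat ->
      (1 <= m2 <= M)%nat -> (s m2 <= b2 < e m2)%nat ->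
      (m1, b1) <> (m2, b2) ->
      acusum X (s m1) (e m1) b1 <> acusum X (s m2) (e m2) b2).

Lemma C0_valid x : In x (C0 X M s e) -> valid x.
Proof.
  intros Hx; apply C0_in in Hx. destruct Hx as [m [Hm ->]].
  unfold valid, mk_tuple; simpl. pose proof (bm_spec X s e m (Hse m Hm)). lia.
Qed.

Lemma C0_inj : inj (C0 X M s e).
Proof.
  intros x y Hx Hy Hv. apply C0_in in Hx; apply C0_in in Hy.
  destruct Hx as [m1 [Hm1 ->]]; destruct Hy as [m2 [Hm2 ->]].
  destruct (Nat.eq_dec m1 m2) as [->|Hne]; auto.
  exfalso. unfold mk_tuple, tval in Hv.
  pose proof (bm_spec X s e m1 (Hse m1 Hm1)). pose proof (bm_spec X s e m2 (Hse m2 Hm2)).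
  apply (Hnoties m1 (bm X s e m1) m2 (bm X s e m2)); [exact Hm1 | tauto | exact Hm2 | tauto | | exact Hv].
  intros Heq; inversion Heq; auto.
Qed.

Lemma Cset_sub a c x : In x (Cset X M s e a c) -> In x (C0 X M s e).
Proof. unfold Cset; rewrite filter_In; tauto. Qed.


Lemma Cset_in a c y : In y (Cset X M s e a c) <->
  In y (C0 X M s e) /\ (a <= ts y)%nat /\ (te y <= c)%nat.
Proof.
  unfold Cset; rewrite filter_In.
  destruct (Nat.leb_spec a (ts y)); destruct (Nat.leb_spec (te y) c); simpl; split; intuition (try discriminate; try lia).
Qed.

Lemma Cset_nil a c : (forall m, (1 <= m <= M)%nat -> (a <= s m)%nat -> (e m <= c)%nat -> False) ->
  Cset X M s e a c = [].
Proof.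
  intros H. destruct (Cset X M s e a c) as [|y l] eqn:E; auto. exfalso.
  assert (Hy : In y (Cset X M s e a c)) by (rewrite E; left; auto).
  apply Cset_in in Hy as [Hy [H1 H2]]. apply C0_in in Hy as [m [Hm ->]].
  apply (H m Hm); simpl in *; lia.
Qed.


Lemma wbs_main fuel : forall a c, (c - a + 1 <= fuel)%nat ->
  forall f, (length (Cset X M s e a c) <= f)%nat ->
  forall x, In x (wbs_fuel X M s e fuel 0 a c) <-> In x (nonrec_fuel f (Cset X M s e a c)).
Proof.
  induction fuel as [|fuel IH]; intros a c Hfu f Hf x; [lia|].
  cbn [wbs_fuel].
  destruct (Nat.leb_spec c a) as [Hca|Hca].
  { rewrite (Cset_nil a c) by (intros m Hm H1 H2; pose proof (Hse m Hm); lia).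
    rewrite nonrec_nil. simpl; tauto. }
  pose proof (argmax_spec (fun p => acusum X (s (fst p)) (e (fst p)) (snd p)) (cands M s e a c)) as Hs.
  destruct (argmax _ (cands M s e a c)) as [[m0 b0]|].
  2:{ rewrite Cset_nil. { rewrite nonrec_nil; simpl; tauto. }
      intros m Hm Ha Hc. assert (Hc' : In (m, bm X s e m) (cands M s e a c)).
      { apply cands_in. pose proof (bm_spec X s e m (Hse m Hm)). lia. }
      rewrite Hs in Hc'; contradiction. }
  destruct Hs as [Hin Hmax]. apply cands_in in Hin as (Hm0 & Ha0 & Hc0 & Hb0).
  destruct (Rle_dec 0 _) as [_|Hn]; [|exfalso; apply Hn; unfold acusum; apply Rabs_pos].
  assert (Hb0e : b0 = bm X s e m0).
  { destruct (bm_spec X s e m0 (Hse _ Hm0)) as [Hbm1 Hbm2].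
    destruct (Nat.eq_dec b0 (bm X s e m0)) as [|Hne]; auto. exfalso.
    apply (Hnoties m0 b0 m0 (bm X s e m0)); auto.
    - intros Heq; inversion Heq; auto.
    - apply Rle_antisym; [apply Hbm2; lia|].
      apply (Hmax (m0, bm X s e m0)). apply cands_in; lia. }
  set (x0 := mk_tuple X s e m0 b0).
  assert (Hx0 : In x0 (Cset X M s e a c)).
  { apply Cset_in. split; [apply C0_in; exists m0; unfold x0; rewrite Hb0e; auto|]. unfold x0; simpl; lia. }
  assert (Harg : argmax tval (Cset X M s e a c) = Some x0).
  { pose proof (argmax_spec tval (Cset X M s e a c)) as H.
    destruct (argmax tval (Cset X M s e a c)) as [z|]; [|rewrite H in Hx0; contradiction].
    destruct H as [Hz1 Hz2]. f_equal.
    apply C0_inj; [eapply Cset_sub; eauto | eapply Cset_sub; eauto |].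
    apply Rle_antisym; [| apply Hz2; auto].
    apply Cset_in in Hz1 as [Hz1 [Hz3 Hz4]]. apply C0_in in Hz1 as [m [Hm ->]].
    simpl in Hz3, Hz4. unfold x0; simpl.
    pose proof (bm_spec X s e m (Hse m Hm)).
    apply (Hmax (m, bm X s e m)). apply cands_in. lia. }
  destruct f as [|f].
  { exfalso. destruct (Cset X M s e a c); [contradiction| simpl in Hf; lia]. }
  cbn [nonrec_fuel]. rewrite Harg. cbn [In]. rewrite in_app_iff.
  rewrite (IH a b0 ltac:(lia) (length (Cset X M s e a b0)) (le_n _) x).
  rewrite (IH (S b0) c ltac:(lia) (length (Cset X M s e (S b0) c)) (le_n _) x).
  set (A := Cset X M s e a b0). set (B := Cset X M s e (S b0) c).
  set (F := filter (fun y => negb ((ts y <=? tb x0)%nat && (tb x0 <? te y)%nat)) (Cset X M s e a c)).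
  assert (tbx0 : tb x0 = b0) by reflexivity.
  assert (HF : forall y, In y F -> In y (Cset X M s e a c)).
  { intros y Hy; unfold F in Hy; apply filter_In in Hy; tauto. }
  assert (Hsame : forall y, In y F <-> In y (A ++ B)).
  { intros y. unfold F, A, B. rewrite filter_In, in_app_iff, !Cset_in. rewrite tbx0.
    split.
    - intros [[Hy [H1 H2]] Hk]. pose proof (C0_valid _ Hy) as Hv; unfold valid in Hv.
      revert Hk; bdestr; simpl; intros Hk;
        first [discriminate | (left; repeat split; auto; lia) | (right; repeat split; auto; lia)].
    - intros [[Hy [H1 H2]]|[Hy [H1 H2]]]; pose proof (C0_valid _ Hy) as Hv; unfold valid in Hv;
        (split; [repeat split; auto; lia|]); bdestr; simpl; auto; lia. }
  assert (HvAB : forall y, In y (A ++ B) -> valid y).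
  { intros y Hy. apply Hsame, HF, Cset_sub in Hy. apply C0_valid; auto. }
  assert (HiAB : inj (A ++ B)).
  { intros y z Hy Hz. apply Hsame, HF, Cset_sub in Hy. apply Hsame, HF, Cset_sub in Hz. apply C0_inj; auto. }
  assert (HsAB : sep A B).
  { intros u v Hu Hv. unfold A, B in *. apply Cset_in in Hu as [Hu [Hu1 Hu2]]. apply Cset_in in Hv as [Hv [Hv1 Hv2]].
    pose proof (C0_valid _ Hu) as Vu; pose proof (C0_valid _ Hv) as Vv; unfold valid in Vu, Vv.
    unfold notkill; split; bdestr; simpl; auto; lia. }
  assert (HlF : (length F <= f)%nat).
  { pose proof (filter_lt (fun y => negb ((ts y <=? tb x0)%nat && (tb x0 <? te y)%nat)) _ x0 Hx0
      (notkill_self x0 (C0_valid _ (Cset_sub _ _ _ Hx0)))). fold F in H. lia. }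
  change (filter (fun y => negb ((ts y <=? tb x0)%nat && (tb x0 <? te y)%nat)) (Cset X M s e a c)) with F.
  rewrite (nonrec_ext _ F (A ++ B) f (length (A ++ B)) (le_n _) HlF (le_n _) Hsame
             (fun y Hy => HvAB y (proj1 (Hsame y) Hy))
             (fun y z Hy Hz => HiAB y z (proj1 (Hsame y) Hy) (proj1 (Hsame z) Hz))).
  rewrite (nonrec_app (length (A ++ B)) A B (length A) (length B)); auto.
  - tauto.
  - rewrite length_app; lia.
Qed.

End Main.

Theorem mainTheorem8 (T M : nat) (X : nat -> R) (s e : nat -> nat)
  (Hint : forall m, (1 <= m <= M)%nat -> (1 <= s m /\ s m < e m /\ e m <= T)%nat)
  (Hnoties : forall m1 b1 m2 b2,
      (1 <= m1 <= M)%nat -> (s m1 <= b1 < e m1)%nat ->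
      (1 <= m2 <= M)%nat -> (s m2 <= b2 < e m2)%nat ->
      (m1, b1) <> (m2, b2) ->
      acusum X (s m1) (e m1) b1 <> acusum X (s m2) (e m2) b2) :
  (forall x : tuple, In x (WBS X M s e 1 T 0) <-> In x (NonRecP X M s e))
  /\ (forall (k : nat) (d : tuple), (S k < length (NonRecP X M s e))%nat ->
        tval (nth (S k) (NonRecP X M s e) d) <= tval (nth k (NonRecP X M s e) d)).
Proof.
  assert (Hse : forall m, (1 <= m <= M)%nat -> (s m < e m)%nat) by (intros m Hm; apply Hint in Hm; lia).
  split.
  - intros x. unfold WBS, NonRecP.
    assert (HC : Cset X M s e 1 T = C0 X M s e).
    { unfold Cset. apply filter_all. intros y Hy. apply C0_in in Hy as [m [Hm ->]].
      apply Hint in Hm. unfold mk_tuple, ts, te. bdestr; simpl; auto; lia. }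
    rewrite <- HC.
    apply (wbs_main X M s e Hse Hnoties); lia.
  - intros k d Hk. unfold NonRecP in *. apply nonrec_sorted. auto.
Qed.
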